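(* Let $\alpha=(\alpha_0,\dots,\alpha_{m-1})\in\mathbb{N}^m$ with $\alpha_0>0$ and $\alpha_{m-1}>0$, and let $r=|\alpha|=\alpha_0+\cdots+\alpha_{m-1}$. Then the minimum polynomial $\mathrm{mmp}(\alpha)$ of the matrix $A_\alpha$ has the form $$\mathrm{mmp}(\alpha)=x^{w_\alpha}(x-1)^{z_\alpha}\,\mathrm{mmp}((r))$$ for some $w_\alpha,z_\alpha\in\mathbb{N}$, where $\mathrm{mmp}((r))$ is the minimum polynomial of $A_{(r)}$ for the length-one sequence $(r)$.
   Context: $\mathbb{N}=\{0,1,2,\dots\}$. Stern's triangle is the array of integers $a(n,k)$, $n\geq 0$, $k\in\mathbb{Z}$, with $a(0,0)=1$, $a(0,k)=0$ for $k\neq 0$, and for all $n\geq 0$ and all $k\in\mathbb{Z}$: $a(n+1,2k+1)=a(n,k)$ and $a(n+1,2k)=a(n,k-1)+a(n,k)$. (Thus row $n$ has nonzero entries exactly at $0\leq k\leq 2^{n+1}-2$, and $\sum_k a(n,k)x^k=\prod_{i=0}^{n-1}(1+x^{2^i}+x^{2\cdot 2^i})$.) For a finite sequence $\gamma=(\gamma_0,\dots,\gamma_{\ell-1})$ of nonnegative integers define $u_\gamma(n)=\sum_{k\in\mathbb{Z}}\prod_{j=0}^{\ell-1}a(n,k+j)^{\gamma_j}$. This is unchanged by deleting leading or trailing zeros of $\gamma$ and (by the left-right symmetry $a(n,k)=a(n,2^{n+1}-2-k)$) by reversing $\gamma$; call two sequences equivalent if they agree after deleting leading and trailing zeros up to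 reversal, and write $[\gamma]$ for the class. Construction of $A_\alpha$: for a sequence $\beta$, write $u_\beta(n+1)=\sum_k\prod_j a(n+1,k+j)^{\beta_j}$, split the sum over $k$ according to the parity of $k$, substitute $a(n+1,2k'+1)=a(n,k')$ and $a(n+1,2k')=a(n,k'-1)+a(n,k')$, and expand each product into monomials in the $a(n,\cdot)$; each resulting sum $\sum_{k'}\prod_i a(n,k'+i)^{\gamma_i}$ equals $u_\gamma(n)$. Collecting terms by equivalence class gives a formal identity $u_\beta(n+1)=\sum_{[\gamma]}c_{[\beta],[\gamma]}\,u_\gamma(n)$ with nonnegative integer coefficients $c_{[\beta],[\gamma]}$ (all $\gamma$ occurring satisfy $|\gamma|=|\beta|$). Call $[\gamma]$ a child of $[\beta]$ if $c_{[\beta],[\gamma]}\neq 0$. Let $D(\alpha)$ be the set of classes reachable from $[\alpha]$ by zero or more child steps; this set is finite. $A_\alpha$ is the square matrix $(c_{[\beta],[\gamma]})_{[\beta],[\gamma]\in D(\alpha)}$, so that the vector $(u_\beta(n))_{[\beta]\in D(\alpha)}$ at $n+1$ equals $A_\alpha$ times the vector at $n$. For example $A_{(2)}=\begin{pmatrix}3&2\\2&2\end{pmatrix}$ with respect to the classes $[(2)],[(1,1)]$. $\mathrm{mmp}(\alpha)$ denotes the monic polynomial of least degree annihilating $A_\alpha$ (independent of the ordering of $D(\alpha)$). *)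

(* Defs.v *)
From HB Require Import structures.
From mathcomp Require Import all_boot all_order all_algebra.
Set Implicit Arguments. Unset Strict Implicit. Unset Printing Implicit Defensive.
Import GRing.Theory.

Definition strip_lead (s : seq nat) : seq nat := drop (find (fun x => x != 0) s) s.
Definition strip (s : seq nat) : seq nat := rev (strip_lead (rev (strip_lead s))).

Fixpoint lexle (s t : seq nat) : bool :=
  match s, t with
  | [::], _ => true
  | _ :: _, [::] => false
  | x :: s', y :: t' => (x < y) || ((x == y) && lexle s' t')
  end.

(* canonical representative of the class [s]: strip zeros, then take the
   lexicographically smaller of the result and its reversal.
   Two sequences are equivalent iff they have the same canon. *)
Definition canon (s : seq nat) : seq nat :=
  let t := strip s in if lexle t (rev t) then t else rev t.

(* A monomial in the variables a(n,k'+t), t = -1,0,1,..., is encoded by its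
   exponent vector e, where e`_i is the exponent of a(n,k'+i-1).
   A term is (coefficient, exponent vector). *)
Definition term := (nat * seq nat)%type.

Fixpoint addv (s t : seq nat) : seq nat :=
  match s, t with
  | [::], _ => t
  | _, [::] => s
  | x :: s', y :: t' => (x + y) :: addv s' t'
  end.

Definition mono (p c : nat) : seq nat := rcons (nseq p 0) c.

(* a factor a(n+1, .) after substitution: one variable x_p,
   or a sum of two variables x_p + x_q *)
Inductive factor := One of nat | Two of nat & nat.

Definition expand (f : factor) (b : nat) : seq term :=
  match f with
  | One p => [:: (1, mono p b)]
  | Two p q => [seq ('C(b, c), addv (mono p c) (mono q (b - c))) | c <- iota 0 b.+1]
  end.

Definition mulp (P Q : seq term) : seq term :=
  [seq (x.1 * y.1, addv x.2 y.2) | x <- P, y <- Q].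

Definition prodp (Ps : seq (seq term)) : seq term :=
  foldr mulp [:: (1, [::])] Ps.

(* k = 2k' (even k): position 2k'+j.
   j = 2i   : a(n+1,2(k'+i))   = a(n,k'+i-1) + a(n,k'+i)  -> Two i (i+1)
   j = 2i+1 : a(n+1,2(k'+i)+1) = a(n,k'+i)                -> One (i+1) *)
Definition fac_even (j : nat) : factor :=
  if odd j then One (j./2).+1 else Two j./2 (j./2).+1.

(* k = 2k'+1 (odd k): position 2k'+1+j.
   j = 2i   : a(n+1,2(k'+i)+1) = a(n,k'+i)                -> One (i+1)
   j = 2i+1 : a(n+1,2(k'+i+1)) = a(n,k'+i) + a(n,k'+i+1)  -> Two (i+1) (i+2) *)
Definition fac_odd (j : nat) : factor :=
  if odd j then Two (j./2).+1 (j./2).+2 else One (j./2).+1.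

Definition terms_of (fac : nat -> factor) (beta : seq nat) : seq term :=
  prodp [seq expand (fac j) (nth 0 beta j) | j <- iota 0 (size beta)].

(* all monomials of the expansion of u_beta(n+1), with multiplicity *)
Definition all_terms (beta : seq nat) : seq term :=
  terms_of fac_even beta ++ terms_of fac_odd beta.

Definition coef (beta gamma : seq nat) : nat :=
  sumn [seq t.1 | t <- all_terms beta & canon t.2 == canon gamma].

Definition children (beta : seq nat) : seq (seq nat) :=
  undup [seq canon t.2 | t <- all_terms beta & coef beta (canon t.2) != 0].

Definition closure_step (L : seq (seq nat)) : seq (seq nat) :=
  undup (L ++ flatten (map children L)).

(* Every class reachable from [alpha] has a canonical representative of
   weight |alpha| and length <= max(size alpha, 3); there are at most
   (|alpha|+1)^(max(size alpha,3)) such representatives, so this many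
   closure steps reach the fixpoint, i.e. the whole set D(alpha). *)
Definition fuel (alpha : seq nat) : nat := (sumn alpha).+1 ^ (maxn (size alpha) 3).

Definition Dlist (alpha : seq nat) : seq (seq nat) :=
  iter (fuel alpha) closure_step [:: canon alpha].

Definition dimD (alpha : seq nat) : nat := (size (Dlist alpha)).-1.

Definition Amx (alpha : seq nat) : 'M[rat]_((dimD alpha).+1) :=
  \matrix_(i, j) (coef (nth [::] (Dlist alpha) i) (nth [::] (Dlist alpha) j))%:R%R.

Definition mmp (alpha : seq nat) : {poly rat} := mxminpoly (Amx alpha).

(* Main.v *)
Require Import Defs.
From HB Require Import structures.
From mathcomp Require Import all_boot all_order all_algebra.
Import GRing.Theory.
From mathcomp Require Import zify.
Local Notation addv := Defs.addv.

Section LApre.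
Local Open Scope ring_scope.
Lemma mxsubE n (P Q : 'M[rat]_n) i j : (P - Q) i j = P i j - Q i j.
Proof. by rewrite !mxE. Qed.

End LApre.

Section LA.
Local Open Scope ring_scope.
Variables (N M : nat) (A : 'M[rat]_N.+1) (B : 'M[rat]_M.+1)
  (sg : 'I_M.+1 -> 'I_N.+1) (S : pred 'I_N.+1) (rho : 'I_N.+1 -> nat).
Hypothesis sg_inj : injective sg.
Hypothesis sgS : forall i, S (sg i).
Hypothesis Ssg : forall j, S j -> exists i, sg i = j.
Hypothesis AB : forall i j, A (sg i) (sg j) = B i j.
Hypothesis Acl : forall i j, S i -> A i j != 0 -> S j.
Hypothesis Atri : forall i j, ~~ S i -> ~~ S j -> A i j != 0 -> (rho j < rho i)%N \/ j = i.
Hypothesis Adiag : forall i, ~~ S i -> A i i = 0 \/ A i i = 1.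

Definition Cl (P : 'M[rat]_N.+1) := forall i j, S i -> ~~ S j -> P i j = 0.
Definition Cor (P : 'M[rat]_N.+1) (Q : 'M[rat]_M.+1) := forall i j, P (sg i) (sg j) = Q i j.

Lemma sumS (F : 'I_N.+1 -> rat) : \sum_(l | S l) F l = \sum_k F (sg k).
Proof.
have -> : \sum_(l | S l) F l = \sum_(l in sg @: [set: 'I_M.+1]) F l.
  apply: eq_bigl => l; apply/idP/imsetP.
    by move=> /Ssg [i <-]; exists i.
  by case=> i _ ->.
rewrite big_imset; last by move=> x y _ _; apply: sg_inj.
by apply: eq_bigl => k; rewrite inE.
Qed.

Lemma AclP : Cl A.
Proof. move=> i j Si nSj; apply/eqP; apply: contraNT nSj => nz; exact: Acl _ _ Si nz. Qed.

Lemma mul_Cl P : Cl P -> Cl (P *m A).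
Proof.
move=> clP i j Si nSj; rewrite mxE big1 // => l _.
case Sl: (S l); first by rewrite (AclP _ _ Sl nSj) mulr0.
by rewrite (clP _ _ Si) ?Sl // mul0r.
Qed.

Lemma mul_Cor P Q : Cl P -> Cor P Q -> Cor (P *m A) (Q *m B).
Proof.
move=> clP cPQ i j; rewrite !mxE (bigID S) /= [X in _ + X]big1 ?addr0.
  by rewrite sumS; apply: eq_bigr => k _; rewrite cPQ AB.
by move=> l nSl; rewrite clP ?mul0r.
Qed.

Lemma horner_Cl_Cor p : Cl (horner_mx A p) /\ Cor (horner_mx A p) (horner_mx B p).
Proof.
elim/poly_ind: p => [|p c [IH1 IH2]].
  by rewrite !rmorph0; split=> i j; rewrite ?mxE.
rewrite !rmorphD !rmorphM /= !horner_mx_X !horner_mx_C -!mulmxE.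
split.
  move=> i j Si nSj; rewrite mxE (@mul_Cl _ IH1 _ _ Si nSj) add0r mxE.
  by case: eqP => [eij|]; rewrite ?mulr0n //; move: nSj; rewrite -eij Si.
move=> i j; rewrite mxE (@mul_Cor _ _ IH1 IH2) [in RHS]mxE; congr (_ + _).
by rewrite !mxE (inj_eq sg_inj).
Qed.

Definition Rows k (Y : 'M[rat]_N.+1) := forall i j, S i || (rho i < k)%N -> Y i j = 0.

Lemma Rows_mul k Y : Rows k Y -> Rows k (A *m Y) /\
  forall i j, ~~ S i -> rho i = k -> (A *m Y) i j = A i i * Y i j.
Proof.
move=> RY; split.
  move=> i j H; rewrite mxE big1 // => l _.
  have [->|nz] := eqVneq (A i l) 0; first by rewrite mul0r.
  rewrite (RY l j) ?mulr0 //.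
  case Si: (S i) H => /= H.
    by rewrite (Acl _ _ Si nz).
  case Sl: (S l) => //=.
  have [lt|->] := Atri _ _ (negbT Si) (negbT Sl) nz; last by [].
  exact: ltn_trans lt H.
move=> i j nSi rk; rewrite mxE (bigD1 i) //= big1 ?addr0 // => l nli.
have [->|nz] := eqVneq (A i l) 0; first by rewrite mul0r.
rewrite (RY l j) ?mulr0 //.
case Sl: (S l) => //=.
have [lt|eli] := Atri _ _ nSi (negbT Sl) nz; first by rewrite -rk.
by rewrite eli eqxx in nli.
Qed.

Lemma Rows_step k Y : Rows k Y -> Rows k.+1 (A *m (A *m Y - Y)).
Proof.
move=> RY.
have [R1 E1] := @Rows_mul _ _ RY.
have RW : Rows k (A *m Y - Y).
  by move=> i j H; rewrite mxsubE (R1 _ _ H) (RY _ _ H) subr0.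
have [R2 E2] := @Rows_mul _ _ RW.
move=> i j H.
case H': (S i || (rho i < k)%N); first exact: R2.
move: H'; case Si: (S i) H => //= H /negbT; rewrite -leqNgt => H'.
have rk : rho i = k by apply/eqP; rewrite eqn_leq H' -ltnS H.
rewrite E2 ?Si // mxsubE E1 ?Si // -{2}[Y i j]mul1r -mulrBl mulrA.
have [->|->] := Adiag _ (negbT Si); first by rewrite mul0r.
by rewrite subrr mulr0 mul0r.
Qed.

Lemma prod01 (s : seq rat) : all (fun x => (x == 0) || (x == 1)) s ->
  \prod_(x <- s) ('X - x%:P) = 'X^(count_mem 0 s) * ('X - 1) ^+ (count_mem 1 s).
Proof.
elim: s => [|x s IH] /=; first by rewrite big_nil expr0 mulr1.
case/andP=> /orP[] /eqP -> /IH {}IH; rewrite big_cons IH /=.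
  by rewrite subr0 /= add1n add0n exprS mulrA.
by rewrite /= add1n add0n exprS mulrCA mulrA.
Qed.

Lemma LA_main : exists w z : nat,
  mxminpoly A = 'X^w * ('X - 1) ^+ z * mxminpoly B.
Proof.
set p := mxminpoly B.
have [cl0 cor0] := horner_Cl_Cor p.
have pB : horner_mx B p = 0 by exact: mx_root_minpoly.
have R0 : Rows 0 (horner_mx A p).
  move=> i j; rewrite orbF => Si.
  have [Sj'|nSj] := boolP (S j); last exact: cl0.
  have [i1 <-] := Ssg _ Si; have [j1 <-] := Ssg _ Sj'.
  by rewrite cor0 pB mxE.
have dvd1 : p %| mxminpoly A.
  apply: mxminpoly_min; apply/matrixP => i j.
  by rewrite -(horner_Cl_Cor (mxminpoly A)).2 mx_root_minpoly !mxE.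
set m := (\max_i rho i).+1.
have Rm : forall k, Rows k (horner_mx A (('X * ('X - 1)) ^+ k * p)).
  elim=> [|k IH]; first by rewrite expr0 mul1r.
  have -> : horner_mx A (('X * ('X - 1)) ^+ k.+1 * p) =
     A *m (A *m horner_mx A (('X * ('X - 1)) ^+ k * p) - horner_mx A (('X * ('X - 1)) ^+ k * p)).
    rewrite exprS -mulrA rmorphM /= rmorphM rmorphB /= horner_mx_X rmorph1.
    by rewrite !mulmxE -mulrA mulrBl mul1r.
  exact: Rows_step.
have dvd2 : mxminpoly A %| ('X * ('X - 1)) ^+ m * p.
  apply: mxminpoly_min; apply/matrixP => i j.
  rewrite [RHS]mxE; apply: (Rm m); apply/orP; right.
  by rewrite ltnS; apply: (leq_bigmax i).
have [g Eg] := dvdpP _ _ dvd1.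
have pnz : p != 0 by rewrite monic_neq0 // mxminpoly_monic.
have gmon : g \is monic.
  by have := mxminpoly_monic A; rewrite Eg monicMr // mxminpoly_monic.
have : g %| ('X * ('X - 1)) ^+ m by rewrite -(dvdp_mul2r _ _ pnz) -Eg.
have -> : ('X * ('X - 1)) ^+ m = \prod_(x <- nseq m (0:rat) ++ nseq m 1) ('X - x%:P).
  rewrite prod01; last by rewrite all_cat !all_nseq eqxx orbT.
  rewrite !count_cat !count_nseq /=.
  by rewrite mul0n addn0 add0n mul1n exprMn.
move=> /dvdp_prod_XsubC [msk].
rewrite prod01; last first.
  apply/allP=> x /mem_mask; rewrite mem_cat => /orP[] /nseqP [-> _].
    by rewrite eqxx.
  by rewrite eqxx orbT.
rewrite eqp_monic //; last by rewrite monicMl ?monicXn // monic_exp // monicXsubC.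
move=> /eqP Hg.
by rewrite Eg Hg; eexists; eexists.
Qed.
End LA.


Lemma nth_addv s t i : nth 0 (addv s t) i = nth 0 s i + nth 0 t i.
Proof.
elim: s t i => [|x s IH] [|y t] [|i] //=; by rewrite ?nth_nil ?addn0.
Qed.

Lemma nth_mono p c i : nth 0 (mono p c) i = if i == p then c else 0.
Proof.
rewrite /mono nth_rcons size_nseq; case: (ltngtP i p) => H //.
by rewrite nth_nseq if_same.
Qed.

Lemma sumn_addv s t : sumn (addv s t) = sumn s + sumn t.
Proof. elim: s t => [|x s IH] [|y t] //=; first by rewrite addn0. by rewrite IH; lia. Qed.

Lemma sumn_mono p c : sumn (mono p c) = c.
Proof. by rewrite /mono -cats1 sumn_cat /= sumn_nseq mul0n addn0. Qed.

Lemma addv_nil s : addv s [::] = s.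
Proof. by case: s. Qed.

Definition nz (x : nat) := x != 0.

Lemma sl_head s : strip_lead s = [::] \/ nth 0 (strip_lead s) 0 != 0.
Proof.
rewrite /strip_lead; case: (boolP (has (fun x => x != 0) s)) => h.
  by right; rewrite nth_drop addn0; exact: (nth_find 0 h).
by left; rewrite (hasNfind h) drop_size.
Qed.

Lemma sl_id s : nth 0 s 0 != 0 -> strip_lead s = s.
Proof. by case: s => [|x s] //= h; rewrite /strip_lead /= h. Qed.

Lemma sumn_sl s : sumn (strip_lead s) = sumn s.
Proof.
rewrite /strip_lead; elim: s => [|x s IH] //=.
by case: eqP => [->|] //=.
Qed.

Lemma sumn_strip s : sumn (strip s) = sumn s.
Proof. by rewrite /strip sumn_rev sumn_sl sumn_rev sumn_sl. Qed.

Definition stripped (w : seq nat) :=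
  (w == [::]) || ((nth 0 w 0 != 0) && (nth 0 w (size w).-1 != 0)).

Lemma strip_id w : stripped w -> strip w = w.
Proof.
case: w => [|x w] // /andP [h1 h2].
rewrite /strip sl_id // sl_id ?revK //.
by rewrite nth_rev //= subn1.
Qed.

Lemma stripped_rev w : stripped (rev w) = stripped w.
Proof.
case: w => [|x w] //.
have ne : rev (x :: w) == [::] = false by rewrite -size_eq0 size_rev.
rewrite /stripped size_rev ne /=.
rewrite !nth_rev /=; try lia.
by rewrite subn1 subnn /= andbC.
Qed.

Lemma sl_nil_or s : strip_lead s = [::] \/ 
  (exists k, k < size s /\ strip_lead s = drop k s /\ nth 0 s k != 0).
Proof.
rewrite /strip_lead; case: (boolP (has (fun x => x != 0) s)) => h.
  right; exists (find (fun x => x != 0) s); split; first by rewrite -has_find.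
  by split=> //; exact: (nth_find 0 h).
by left; rewrite (hasNfind h) drop_size.
Qed.

Lemma stripped_strip s : stripped (strip s).
Proof.
rewrite /strip stripped_rev.
case: (sl_nil_or s) => [->|[k [ks [Ew nk]]]]; first by [].
set w := strip_lead s.
case: (sl_nil_or (rev w)) => [->|[k' [ks' [Ey nk']]]]; first by [].
rewrite /stripped Ey nth_drop addn0 nk' /= size_drop nth_drop; apply/orP; right.
rewrite size_rev in ks' *.
rewrite nth_rev; last lia.
have -> : size w - (k' + ((size w - k').-1)).+1 = 0 by lia.
by rewrite /w Ew nth_drop addn0.
Qed.

Lemma strip_canon s : strip (canon s) = canon s.
Proof.
rewrite /canon /=; case: ifP => _; apply: strip_id. exact: stripped_strip.
by rewrite stripped_rev; exact: stripped_strip.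
Qed.

Lemma strip_strip s : strip (strip s) = strip s.
Proof. exact/strip_id/stripped_strip. Qed.

Lemma lexle_total s t : lexle s t || lexle t s.
Proof.
elim: s t => [|x s IH] [|y t] //=.
case: (ltngtP x y) => //= ->; rewrite eqxx /=; exact: IH.
Qed.

Lemma canon_idem s : canon (canon s) = canon s.
Proof.
set t := strip s.
have ct : canon s = if lexle t (rev t) then t else rev t by [].
rewrite {1}/canon strip_canon ct.
case h: (lexle t (rev t)); first by rewrite h.
rewrite revK; have := lexle_total t (rev t); rewrite h /= => ->.
by [].
Qed.

Lemma sumn_canon s : sumn (canon s) = sumn s.
Proof. rewrite /canon /=; case: ifP => _; [exact: sumn_strip | by rewrite sumn_rev sumn_strip]. Qed.

Lemma size_canon s : size (canon s) = size (strip s).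
Proof. by rewrite /canon /=; case: ifP; rewrite ?size_rev. Qed.

Lemma find_ge (a : pred nat) s m : m <= size s ->
  (forall i, i < m -> ~~ a (nth 0 s i)) -> m <= find a s.
Proof.
move=> ms h; rewrite leqNgt; apply/negP => lt.
have hs : has a s by rewrite has_find; exact: leq_trans lt ms.
by have := h _ lt; rewrite (nth_find 0 hs).
Qed.

Lemma size_strip_bound v lo hi :
  (forall i, nth 0 v i != 0 -> lo <= i <= hi) -> size (strip v) <= hi.+1 - lo.
Proof.
move=> hv; rewrite /strip size_rev.
case: (sl_nil_or v) => [->|[k [ks [Ew nk]]]]; first by [].
have /andP[lok khi] := hv _ nk.
rewrite Ew /strip_lead size_drop size_rev size_drop.
set m := size v - k - (hi.+1 - k).
have : m <= find (fun x => x != 0) (rev (drop k v)).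
  apply: find_ge; first by rewrite size_rev size_drop /m; lia.
  move=> i im; rewrite nth_rev; last by rewrite size_drop /m; lia.
  rewrite nth_drop size_drop negbK; apply/negPn/negP => nz0.
  have := hv _ nz0; rewrite /m in im; lia.
rewrite /m; lia.
Qed.


Definition fvars (f : factor) (i : nat) :=
  match f with One p => i == p | Two p q => (i == p) || (i == q) end.

Lemma expand_props f b x : x \in expand f b ->
  [/\ 0 < x.1, sumn x.2 = b & forall i, nth 0 x.2 i != 0 -> fvars f i].
Proof.
case: f => [p|p q]; rewrite /expand.
  rewrite inE => /eqP ->; split; [by [] | exact: sumn_mono | ].
  by move=> i /=; rewrite nth_mono; case: (i =P p) => // ->; rewrite eqxx.
case/mapP => c; rewrite mem_iota add0n ltnS => /andP [_ cb] ->.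
split; first by rewrite bin_gt0.
  by rewrite sumn_addv !sumn_mono; lia.
move=> i /=; rewrite nth_addv !nth_mono.
by case: (i =P p) => [->|]; rewrite ?eqxx //; case: (i =P q) => [->|]; rewrite ?eqxx ?orbT.
Qed.

Lemma expand_nonempty f b : expand f b != [::].
Proof. by case: f => [p|p q] //=; rewrite -size_eq0 size_map size_iota. Qed.

Lemma mem_mulp t P Q : t \in mulp P Q ->
  exists x y, [/\ x \in P, y \in Q & t = (x.1 * y.1, addv x.2 y.2)].
Proof. by case/allpairsP => [[x y] [/= hx hy ->]]; exists x, y. Qed.

Lemma mulp_nonempty P Q : P != [::] -> Q != [::] -> mulp P Q != [::].
Proof.
by case: P => [|x P] // _; case: Q => [|y Q] // _.
Qed.

Lemma prodp_props (fac : nat -> factor) (beta : seq nat) js t :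
  t \in prodp [seq expand (fac j) (nth 0 beta j) | j <- js] ->
  [/\ 0 < t.1, sumn t.2 = sumn [seq nth 0 beta j | j <- js] &
      forall i, nth 0 t.2 i != 0 -> exists2 j, j \in js & fvars (fac j) i].
Proof.
elim: js t => [|j js IH] t /=.
  by rewrite inE => /eqP -> /=; split => // i; rewrite nth_nil.
case/mem_mulp => x [y [hx hy ->]] /=.
have [x1 x2 x3] := expand_props _ _ _ hx.
have [y1 y2 y3] := IH _ hy.
split; first by rewrite muln_gt0 x1 y1.
  by rewrite sumn_addv x2 y2.
move=> i; rewrite nth_addv.
case: (boolP (nth 0 x.2 i != 0)) => [/x3 h _|]; first by exists j; rewrite ?inE ?eqxx.
rewrite negbK => /eqP -> /=; move/y3 => [j' hj' h]; exists j' => //.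
by rewrite inE hj' orbT.
Qed.

Lemma prodp_nonempty (fac : nat -> factor) beta js :
  prodp [seq expand (fac j) (nth 0 beta j) | j <- js] != [::].
Proof.
elim: js => [|j js IH] //=; apply: mulp_nonempty => //; exact: expand_nonempty.
Qed.

Lemma terms_props fac beta t : t \in terms_of fac beta ->
  [/\ 0 < t.1, sumn t.2 = sumn beta &
      forall i, nth 0 t.2 i != 0 -> exists2 j, j < size beta & fvars (fac j) i].
Proof.
move/prodp_props => [h1 h2 h3]; split => //.
  by rewrite h2 -/(mkseq _ _) mkseq_nth.
move=> i /h3 [j]; rewrite mem_iota add0n => /andP [_ hj] hf; by exists j.
Qed.

Lemma terms_nonempty fac beta : terms_of fac beta != [::].
Proof. exact: prodp_nonempty. Qed.

Lemma even_size beta t : t \in terms_of fac_even beta ->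
  size (strip t.2) <= (size beta).-1./2.+2.
Proof.
move/terms_props => [_ _ h].
have := @size_strip_bound t.2 0 ((size beta).-1./2.+1).
rewrite subn0; apply => i /h [j hj]; rewrite /fac_even.
case: ifP => _ /=; [move/eqP -> | case/orP => /eqP ->]; lia.
Qed.

Lemma odd_size beta t : t \in terms_of fac_odd beta ->
  size (strip t.2) <= (size beta)./2.+1.
Proof.
move/terms_props => [_ _ h].
have := @size_strip_bound t.2 1 ((size beta)./2.+1).
rewrite subn1; apply => i /h [j hj]; rewrite /fac_odd.
case: ifP => oj /=; [case/orP => /eqP -> | move/eqP ->]; try lia.
Qed.


Lemma all_terms_props beta t : t \in all_terms beta ->
  0 < t.1 /\ sumn t.2 = sumn beta.
Proof.
by rewrite mem_cat => /orP [] /terms_props [h1 h2 _].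
Qed.

Lemma leq_sumn_mem x s : x \in s -> x <= sumn s.
Proof.
elim: s => [|y s IH] //=; rewrite inE => /orP [/eqP ->|/IH]; lia.
Qed.

Lemma coef_ge beta gamma t : t \in all_terms beta -> canon t.2 == canon gamma ->
  t.1 <= coef beta gamma.
Proof.
move=> ht hc; apply: leq_sumn_mem; apply: map_f.
by rewrite mem_filter hc.
Qed.

Lemma mem_children beta t : t \in all_terms beta -> canon t.2 \in children beta.
Proof.
move=> ht; rewrite /children mem_undup; apply/mapP; exists t => //.
rewrite mem_filter ht andbT -lt0n.
have [h1 _] := all_terms_props _ _ ht.
apply: leq_trans h1 _; apply: coef_ge => //.
by rewrite canon_idem.
Qed.

Lemma children_mem beta gamma : gamma \in children beta ->
  exists2 t, t \in all_terms beta & gamma = canon t.2.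
Proof.
rewrite /children mem_undup => /mapP [t]; rewrite mem_filter => /andP [_ ht] ->.
by exists t.
Qed.

Lemma coef_nz beta gamma : coef beta gamma != 0 ->
  exists2 t, t \in all_terms beta & canon t.2 = canon gamma.
Proof.
rewrite /coef; set L := [seq _ <- _ | _].
case E: L => [|t L'] //= _.
have : t \in L by rewrite E inE eqxx.
by rewrite mem_filter => /andP [/eqP h ht]; exists t.
Qed.

Lemma step_sub L : {subset L <= closure_step L}.
Proof. by move=> x hx; rewrite /closure_step mem_undup mem_cat hx. Qed.

Lemma step_child L beta gamma : beta \in L -> gamma \in children beta ->
  gamma \in closure_step L.
Proof.
move=> hb hg; rewrite /closure_step mem_undup mem_cat; apply/orP; right.
by apply/flattenP; exists (children beta) => //; apply: map_f.
Qed.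

Lemma step_inv (P : seq nat -> Prop) L :
  (forall beta, beta \in L -> P beta) ->
  (forall beta gamma, P beta -> gamma \in children beta -> P gamma) ->
  forall beta, beta \in closure_step L -> P beta.
Proof.
move=> hL hc beta; rewrite /closure_step mem_undup mem_cat => /orP [/hL //|].
by case/flattenP => s /mapP [b hb ->] hs; apply: (hc b) => //; apply: hL.
Qed.

Lemma iter_inv (P : seq nat -> Prop) L k :
  (forall beta, beta \in L -> P beta) ->
  (forall beta gamma, P beta -> gamma \in children beta -> P gamma) ->
  forall beta, beta \in iter k closure_step L -> P beta.
Proof.
move=> hL hc; elim: k => [|k IH] //= beta; exact: step_inv.
Qed.

Lemma iter_mono L k k' : k <= k' ->
  {subset iter k closure_step L <= iter k' closure_step L}.
Proof.
move=> le; rewrite -(subnK le); elim: (k' - k) => [|d IH] //= x hx.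
by apply: step_sub; apply: IH.
Qed.

Lemma iter_uniq L k : uniq L -> uniq (iter k closure_step L).
Proof. by case: k => [|k] //= _; apply: undup_uniq. Qed.


Lemma stripped_canon s : stripped (canon s).
Proof.
rewrite /canon /=; case: ifP => _; [exact: stripped_strip | by rewrite stripped_rev; exact: stripped_strip].
Qed.

Lemma canon3 x y z : x != 0 -> z != 0 ->
  canon [:: x; y; z] = [:: x; y; z] \/ canon [:: x; y; z] = [:: z; y; x].
Proof.
move=> hx hz; rewrite /canon /= strip_id; last by rewrite /stripped /= hx hz.
by case: ifP; [left | right].
Qed.

Lemma size_canon3 x y z : (x == 0) || (z == 0) -> size (canon [:: x; y; z]) <= 2.
Proof.
move=> h; rewrite size_canon.
case/orP: h => /eqP ->.
  apply: (leq_trans (@size_strip_bound _ 1 2 _)) => // -[|[|[|i]]] //=.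
  by rewrite nth_nil.
apply: (leq_trans (@size_strip_bound _ 0 1 _)) => // -[|[|[|i]]] //=.
by rewrite nth_nil.
Qed.

Lemma even3_eq a b c : terms_of fac_even [:: a; b; c] =
  mulp (expand (Two 0 1) a) (mulp (expand (One 1) b)
     (mulp (expand (Two 1 2) c) [:: (1, [::])])).
Proof. by []. Qed.

Lemma vec3 a b c c1 e : c1 <= a -> e <= c ->
  addv (addv (mono 0 c1) (mono 1 (a - c1)))
       (addv (mono 1 b) (addv (addv (mono 1 e) (mono 2 (c - e))) [::]))
  = [:: c1; a - c1 + b + e; c - e].
Proof. by move=> h1 h2; rewrite /mono /=; congr [:: _; _; _]; lia. Qed.

Lemma even3_terms a b c t : t \in terms_of fac_even [:: a; b; c] ->
  exists c1 e, [/\ c1 <= a, e <= c & t.2 = [:: c1; a - c1 + b + e; c - e]].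
Proof.
rewrite even3_eq => /mem_mulp [x [y' [hx hy' ->]]].
case/mem_mulp : hy' => y [y2 [hy hy2 ->]].
case/mem_mulp : hy2 => z [u [hz hu ->]].
move: hu; rewrite inE => /eqP -> /=.
move: hy; rewrite /expand inE => /eqP -> /=.
move: hx; rewrite /expand => /mapP [c1]; rewrite mem_iota ltnS => /andP [_ h1] -> /=.
move: hz => /mapP [e]; rewrite mem_iota ltnS => /andP [_ h2] -> /=.
by exists c1, e; split => //; apply: vec3.
Qed.


Lemma size_le2 beta t : size beta <= 2 -> t \in all_terms beta -> size (canon t.2) <= 2.
Proof.
move=> hs; rewrite size_canon mem_cat => /orP [/even_size|/odd_size] h; lia.
Qed.

Lemma size_ge4 beta t : 4 <= size beta -> t \in all_terms beta -> size (canon t.2) < size beta.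
Proof.
move=> hs; rewrite size_canon mem_cat => /orP [/even_size|/odd_size] h; lia.
Qed.

Lemma size_3odd beta t : size beta = 3 -> t \in terms_of fac_odd beta -> size (canon t.2) <= 2.
Proof. by move=> hs; rewrite size_canon => /odd_size; rewrite hs. Qed.

Definition rk (r : nat) (beta : seq nat) := r.+1 * size beta + (r - nth 0 beta 1).

Lemma size3 (beta : seq nat) : size beta = 3 -> exists a b c, beta = [:: a; b; c].
Proof. by case: beta => [|a [|b [|c [|d s]]]] //= _; exists a, b, c. Qed.

Lemma canon_ends a b c : canon [:: a; b; c] = [:: a; b; c] -> (a != 0) && (c != 0).
Proof.
move=> h; have := stripped_canon [:: a; b; c]; rewrite h /stripped /=.
by [].
Qed.

Lemma tri r beta gamma : canon beta = beta -> canon gamma = gamma -> sumn gamma = r ->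
  3 <= size beta -> 3 <= size gamma -> coef beta gamma != 0 ->
  rk r gamma < rk r beta \/ gamma = beta.
Proof.
move=> cb cg sg hb hg /coef_nz [t ht]; rewrite cg => ct.
case: (leqP 4 (size beta)) => h4.
  have := size_ge4 _ _ h4 ht; rewrite ct => hlt; left; rewrite /rk.
  have : r.+1 * (size gamma).+1 <= r.+1 * size beta by rewrite leq_mul2l hlt orbT.
  rewrite mulnS; lia.
have /size3 [a [b [c Eb]]] : size beta = 3 by lia.
move: ht; rewrite mem_cat => /orP [he|ho]; last first.
  have := size_3odd _ _ (_ : size beta = 3) ho; rewrite ct; lia.
move: he; rewrite Eb => /even3_terms [c1 [e [h1 h2 Et]]].
rewrite Et in ct.
have /andP [ha hc] : (a != 0) && (c != 0) by apply: (canon_ends a b c); rewrite -Eb.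
have cz : (c1 != 0) && (c - e != 0).
  case: (boolP ((c1 == 0) || (c - e == 0))) => hz; last by move: hz; rewrite negb_or.
  have := size_canon3 c1 (a - c1 + b + e) (c - e) hz; rewrite ct; lia.
case/andP: cz => hc1 hce.
have sm : nth 0 gamma 1 = a - c1 + b + e.
  by rewrite -ct; case: (canon3 c1 (a - c1 + b + e) (c - e) hc1 hce) => ->.
have sgm : sumn gamma = c1 + (a - c1 + b + e) + (c - e).
  by rewrite -ct; case: (canon3 c1 (a - c1 + b + e) (c - e) hc1 hce) => -> /=; lia.
have sz : size gamma = 3.
  by rewrite -ct; case: (canon3 c1 (a - c1 + b + e) (c - e) hc1 hce) => ->.
case: (ltngtP (a - c1 + b + e) b) => hm; first lia.
  by left; rewrite /rk sz /= sm; lia.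
right; rewrite -ct; have -> : c1 = a by lia.
have -> : e = 0 by lia.
by rewrite subn0 subnn add0n addn0 -Eb cb.
Qed.

Lemma coef_big beta gamma :
  coef beta gamma = \sum_(t <- all_terms beta) (if canon t.2 == canon gamma then t.1 else 0).
Proof. by rewrite /coef sumnE big_map big_filter big_mkcond. Qed.

Lemma sum_mulp (F : term -> nat) P Q :
  \sum_(t <- mulp P Q) F t = \sum_(x <- P) \sum_(y <- Q) F (x.1 * y.1, addv x.2 y.2).
Proof. by rewrite /mulp big_allpairs_dep. Qed.

Lemma ind3 a b c c1 e : a != 0 -> c != 0 -> canon [:: a; b; c] = [:: a; b; c] ->
  c1 <= a -> e <= c ->
  (canon [:: c1; a - c1 + b + e; c - e] == canon [:: a; b; c]) = (c1 == a) && (e == 0).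
Proof.
move=> ha hc cb h1 h2.
case: (boolP ((c1 == a) && (e == 0))) => [/andP [/eqP -> /eqP ->]|hn].
  by rewrite subn0 subnn add0n addn0 eqxx.
apply/negbTE; rewrite cb; apply/negP => /eqP ct.
case: (boolP ((c1 == 0) || (c - e == 0))) => hz.
  by have := size_canon3 c1 (a - c1 + b + e) (c - e) hz; rewrite ct.
move: hz; rewrite negb_or => /andP [hc1 hce].
have sm : nth 0 (canon [:: c1; a - c1 + b + e; c - e]) 1 = a - c1 + b + e.
  by case: (canon3 c1 (a - c1 + b + e) (c - e) hc1 hce) => ->.
rewrite ct /= in sm.
move: hn; rewrite negb_and => /orP [] /eqP; lia.
Qed.

Lemma sum2 a c (G : nat -> nat -> nat) :
  (forall c1 e, c1 <= a -> e <= c -> G c1 e = if (c1 == a) && (e == 0) then 1 else 0) ->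
  \sum_(c1 <- iota 0 a.+1) \sum_(e <- iota 0 c.+1) G c1 e = 1.
Proof.
move=> hG.
transitivity (\sum_(c1 <- iota 0 a.+1) (if c1 == a then 1 else 0)).
  apply: eq_big_seq => c1; rewrite mem_iota add0n ltnS => /andP [_ h1].
  rewrite (_ : iota 0 c.+1 = 0 :: iota 1 c) // big_cons hG // big1_seq ?addn0.
    by case: (c1 == a).
  move=> e /andP [_]; rewrite mem_iota => /andP [he1 he2]; rewrite hG; last lia.
    by case: (e =P 0) => [eq0|]; rewrite ?andbF ?andbT //; move: he1; rewrite eq0.
  by [].
rewrite -addn1 iotaD big_cat /= big_seq1 eqxx big1_seq //.
move=> c1 /andP [_]; rewrite mem_iota => /andP [_ h]; case: eqP => //; lia.
Qed.

Lemma diag beta : canon beta = beta -> 3 <= size beta ->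
  coef beta beta = 0 \/ coef beta beta = 1.
Proof.
move=> cb hb.
case: (leqP 4 (size beta)) => h4.
  left; apply/eqP; apply: contraT => /coef_nz [t ht]; rewrite cb => ct.
  by have := size_ge4 _ _ h4 ht; rewrite ct ltnn.
right.
have /size3 [a [b [c Eb]]] : size beta = 3 by lia.
have /andP [ha hc] : (a != 0) && (c != 0) by apply: (canon_ends a b c); rewrite -Eb.
rewrite coef_big /all_terms big_cat /=.
rewrite [X in _ + X]big1_seq ?addn0; last first.
  move=> t /andP [_ ht]; rewrite cb.
  case: eqP => // ct.
  by have := size_3odd _ _ (_ : size beta = 3) ht; rewrite ct; lia.
rewrite Eb even3_eq sum_mulp /expand big_map.
under eq_bigr => c1 _ do rewrite sum_mulp big_seq1 sum_mulp big_map.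
under eq_bigr => c1 _ do under eq_bigr => e _ do rewrite big_seq1 /=.
apply: sum2 => c1 e h1 h2.
rewrite (_ : [:: c1 + 0 + (0 + (0 + 0)); a - c1 + (b + (e + 0)); c - e] =
             [:: c1; a - c1 + b + e; c - e]); last by congr [:: _; _; _]; lia.
rewrite ind3 //; last by rewrite -Eb.
by case: (c1 =P a) => [->|]; case: (e =P 0) => [->|] //=; rewrite binn bin0.
Qed.


Lemma mulp_f x y P Q : x \in P -> y \in Q -> (x.1 * y.1, addv x.2 y.2) \in mulp P Q.
Proof. move=> hx hy; exact: (allpairs_f (fun x y : term => (x.1 * y.1, addv x.2 y.2))). Qed.

Lemma canon_0r r : r != 0 -> canon [:: 0; r] = [:: r].
Proof. case: r => // r _. by rewrite /canon /strip /strip_lead /= ltnn eqxx. Qed.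

Lemma canon_r r : r != 0 -> canon [:: r] = [:: r].
Proof. case: r => // r _. by rewrite /canon /strip /strip_lead /= ltnn eqxx. Qed.

Lemma expand_Two_in p q b c : c <= b ->
  ('C(b, c), addv (mono p c) (mono q (b - c))) \in expand (Two p q) b.
Proof.
move=> h; apply: (map_f (fun c => ('C(b, c), addv (mono p c) (mono q (b - c))))).
by rewrite mem_iota add0n ltnS.
Qed.

Lemma even1_eq x : terms_of fac_even [:: x] = mulp (expand (Two 0 1) x) [:: (1, [::])].
Proof. by []. Qed.

Lemma even2_eq x y : terms_of fac_even [:: x; y] =
  mulp (expand (Two 0 1) x) (mulp (expand (One 1) y) [:: (1, [::])]).
Proof. by []. Qed.

Lemma reach_r_child beta r : canon beta = beta -> sumn beta = r -> 0 < r ->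
  size beta <= 2 -> [:: r] \in children beta.
Proof.
move=> cb sb r0 hs.
case: beta cb sb hs => [|x [|y [|z s]]] //= cb sb hs; first by move: r0; rewrite -sb.
  have ht : ('C(x, 0) * 1, addv (addv (mono 0 0) (mono 1 (x - 0))) [::]) \in all_terms [:: x].
    rewrite mem_cat even1_eq; apply/orP; left.
    apply: (mulp_f ('C(x, 0), addv (mono 0 0) (mono 1 (x - 0))) (1, [::])); last by rewrite inE.
    exact: expand_Two_in.
  have := mem_children _ _ ht; rewrite /= subn0 canon_0r; last by lia.
  by rewrite -sb addn0.
have ht : ('C(x, 0) * (1 * 1), addv (addv (mono 0 0) (mono 1 (x - 0)))
            (addv (mono 1 y) [::])) \in all_terms [:: x; y].
  rewrite mem_cat even2_eq; apply/orP; left.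
  apply: (mulp_f ('C(x, 0), addv (mono 0 0) (mono 1 (x - 0))) (1 * 1, addv (mono 1 y) [::])); first exact: expand_Two_in.
  by apply: (mulp_f (1, mono 1 y) (1, [::])); rewrite inE.
have := mem_children _ _ ht; rewrite /= subn0 canon_0r; last by lia.
by rewrite -sb addn0.
Qed.

Lemma reach L r : 0 < r -> forall n k beta, beta \in iter k closure_step L ->
  canon beta = beta -> sumn beta = r -> size beta <= n.+2 ->
  [:: r] \in iter (k + n.+1) closure_step L.
Proof.
move=> r0; elim=> [|n IH] k beta hb cb sb hs.
  by rewrite addn1; apply: step_child hb _; apply: reach_r_child.
case: (leqP (size beta) 2) => h2.
  apply: (@iter_mono L k.+1); first lia.
  by apply: step_child hb _; apply: reach_r_child.
case E: (terms_of fac_odd beta) => [|t ts].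
  by have := terms_nonempty fac_odd beta; rewrite E.
have ht : t \in terms_of fac_odd beta by rewrite E mem_head.
have hta : t \in all_terms beta by rewrite mem_cat ht orbT.
have hg := mem_children _ _ hta.
have := IH k.+1 (canon t.2) (step_child _ _ _ hb hg) (canon_idem _).
rewrite addSnnS; apply.
  by rewrite sumn_canon (all_terms_props _ _ hta).2.
rewrite size_canon; apply: leq_trans (odd_size _ _ ht) _.
rewrite ltnS leq_half_double; apply: leq_trans hs _; lia.
Qed.

Lemma pairs_in r beta : 0 < r -> canon beta = beta -> sumn beta = r -> size beta <= 2 ->
  beta = [:: r] \/ beta \in children [:: r].
Proof.
move=> r0; case: beta => [|x [|y [|z s]]] //= cb sb hs; first by move: r0; rewrite -sb.
  by left; rewrite -sb addn0.
right.
have ht : ('C(r, x) * 1, addv (addv (mono 0 x) (mono 1 (r - x))) [::]) \in all_terms [:: r].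
  rewrite mem_cat even1_eq; apply/orP; left.
  apply: (mulp_f ('C(r, x), addv (mono 0 x) (mono 1 (r - x))) (1, [::])); last by rewrite inE.
  by apply: expand_Two_in; lia.
have := mem_children _ _ ht.
rewrite (_ : (_, _).2 = [:: x; y]) ?cb //.
by rewrite /mono /=; congr [:: _; _]; lia.
Qed.


Lemma nth_le_sumn s i : nth 0 s i <= sumn s.
Proof. elim: s i => [|x s IH] [|i] //=; [lia | have := IH i; lia]. Qed.

Lemma pow_bound m r : 2 <= m -> 0 < r -> m.+2 <= r.+1 ^ m.
Proof.
move=> hm r0; apply: (@leq_trans (2 ^ m)); last by rewrite leq_exp2r; lia.
elim: m hm => [|m IH] //; rewrite ltnS leq_eqVlt => /orP [/eqP <-|h] //.
by rewrite expnS; have := IH h; lia.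
Qed.

Section Main.
Variable alpha : seq nat.
Hypothesis h0 : 0 < nth 0 alpha 0.
Hypothesis h1 : 0 < nth 0 alpha (size alpha).-1.
Let r := sumn alpha.
Let DA := Dlist alpha.
Let DR := Dlist [:: r].

Lemma r_pos : 0 < r.
Proof. by apply: leq_trans h0 _; apply: nth_le_sumn. Qed.

Lemma size_canon_alpha : size (canon alpha) = size alpha.
Proof.
rewrite size_canon strip_id //.
case: alpha h0 h1 => [|x s] //= hx hs.
by rewrite /stripped /= -!lt0n hx hs.
Qed.

Lemma invA beta : beta \in DA -> canon beta = beta /\ sumn beta = r.
Proof.
move: beta; apply: (iter_inv (fun b => canon b = b /\ sumn b = r)).
  by move=> b; rewrite inE => /eqP ->; rewrite canon_idem sumn_canon.
move=> b g [cb sb] /children_mem [t ht ->]; rewrite canon_idem sumn_canon.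
by rewrite (all_terms_props _ _ ht).2.
Qed.

Lemma invR beta : beta \in DR -> [/\ canon beta = beta, sumn beta = r & size beta <= 2].
Proof.
move: beta; apply: (iter_inv (fun b => [/\ canon b = b, sumn b = r & size b <= 2])).
  move=> b; rewrite inE => /eqP ->; have rn : r != 0 by have := r_pos; lia.
  by rewrite canon_r //; split => //=; [exact: canon_r | rewrite addn0].
move=> b g [cb sb szb] /children_mem [t ht ->]; rewrite canon_idem sumn_canon.
by rewrite (all_terms_props _ _ ht).2 (size_le2 _ _ szb ht).
Qed.

Lemma fuel_ge : (size alpha).+2 <= fuel alpha.
Proof.
rewrite /fuel; apply: leq_trans (pow_bound _ _ _ r_pos); first lia.
lia.
Qed.

Lemma r_inA : [:: r] \in iter (size alpha).+1 closure_step [:: canon alpha].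
Proof.
have := @reach [:: canon alpha] r r_pos (size alpha) 0 (canon alpha).
rewrite add0n; apply; rewrite ?inE ?canon_idem ?sumn_canon ?size_canon_alpha //. by rewrite leqW.
Qed.

Lemma T_inA beta : beta = [:: r] \/ beta \in children [:: r] -> beta \in DA.
Proof.
move=> h; apply: (@iter_mono _ (size alpha).+2); first exact: fuel_ge.
case: h => [->|hc]; first by apply: step_sub; exact: r_inA.
exact: step_child r_inA hc.
Qed.

Lemma T_inR beta : beta = [:: r] \/ beta \in children [:: r] -> beta \in DR.
Proof.
have hr : [:: r] \in iter 0 closure_step [:: canon [:: r]].
  by rewrite /= canon_r ?inE //; have := r_pos; lia.
move=> h; apply: (@iter_mono _ 1); first by rewrite /fuel expn_gt0.
case: h => [->|hc]; first by apply: step_sub.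
exact: step_child hr hc.
Qed.

Lemma DR_DA beta : (beta \in DR) = (beta \in DA) && (size beta <= 2).
Proof.
apply/idP/andP.
  move=> /invR [cb sb szb]; split=> //; apply: T_inA; exact: pairs_in r_pos cb sb szb.
move=> [/invA [cb sb] szb]; apply: T_inR; exact: pairs_in r_pos cb sb szb.
Qed.

Lemma memA0 : canon alpha \in DA.
Proof. by apply: (@iter_mono _ 0) => //; rewrite inE. Qed.

Lemma sizeA : size DA = (dimD alpha).+1.
Proof.
rewrite /dimD prednK // lt0n size_eq0; apply/eqP => E.
by have := memA0; rewrite /DA E.
Qed.

Lemma memR0 : [:: r] \in DR.
Proof.
apply: T_inR; by left.
Qed.

Lemma sizeR : size DR = (dimD [:: r]).+1.
Proof.
rewrite /dimD prednK // lt0n size_eq0; apply/eqP => E.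
by have := memR0; rewrite /DR E.
Qed.

Lemma uniqA : uniq DA. Proof. exact: iter_uniq. Qed.
Lemma uniqR : uniq DR. Proof. exact: iter_uniq. Qed.

Definition sg (i : 'I_(dimD [:: r]).+1) : 'I_(dimD alpha).+1 :=
  inord (index (nth [::] DR i) DA).

Lemma nthR (i : 'I_(dimD [:: r]).+1) : nth [::] DR i \in DR.
Proof. by apply: mem_nth; rewrite sizeR. Qed.

Lemma nthA (i : 'I_(dimD alpha).+1) : nth [::] DA i \in DA.
Proof. by apply: mem_nth; rewrite sizeA. Qed.

Lemma sg_nth i : nth [::] DA (sg i) = nth [::] DR i.
Proof.
have := nthR i; rewrite DR_DA => /andP [hA _].
by rewrite /sg inordK ?nth_index // -sizeA index_mem.
Qed.

Lemma main_mx : exists w z : nat,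
  (mmp alpha = 'X^w * ('X - 1) ^+ z * mmp [:: sumn alpha])%R.
Proof.
apply: (@LA_main (dimD alpha) (dimD [:: r]) (Amx alpha) (Amx [:: r]) sg
   (fun j => size (nth [::] DA j) <= 2) (fun j => rk r (nth [::] DA j))).
- move=> i j E; have := congr1 (fun k : 'I_(dimD alpha).+1 => nth [::] DA k) E.
  rewrite /= !sg_nth => /eqP.
  by rewrite nth_uniq ?sizeR ?uniqR // => /eqP; apply: val_inj.
- by move=> i /=; rewrite sg_nth; have := nthR i; rewrite DR_DA => /andP [].
- move=> j /= Sj.
  have hj : nth [::] DA j \in DR by rewrite DR_DA nthA.
  exists (inord (index (nth [::] DA j) DR)); apply: val_inj.
  have e1 : nth [::] DR (inord (index (nth [::] DA j) DR) : 'I_(dimD [:: r]).+1)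
     = nth [::] DA j by rewrite inordK ?nth_index // -sizeR index_mem.
  rewrite /sg e1 /= inordK; last by have := nthA j; rewrite -index_mem sizeA.
  by rewrite index_uniq ?sizeA ?uniqA.
- by move=> i j; rewrite /Amx !mxE !sg_nth.
- move=> i j /= Si; rewrite /Amx mxE Num.Theory.pnatr_eq0 => /coef_nz [t ht].
  have [cg _] := invA _ (nthA j).
  rewrite cg => <-; exact: size_le2 _ _ Si ht.
- move=> i j /= nSi nSj; rewrite /Amx mxE Num.Theory.pnatr_eq0 => nz.
  have [cb _] := invA _ (nthA i); have [cg sg0] := invA _ (nthA j).
  case: (tri _ _ _ cb cg sg0 _ _ nz); [lia | lia | by left | move=> e; right].
  apply: val_inj; apply/eqP; rewrite -(nth_uniq [::] _ _ uniqA); [change (nth [::] DA j == nth [::] DA i); by rewrite e | by rewrite sizeA; apply: ltn_ord | by rewrite sizeA; apply: ltn_ord].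
- move=> i /= nSi; rewrite /Amx mxE.
  have [cb _] := invA _ (nthA i).
  by case: (diag _ cb _) => [|->|->]; [lia | left | right].
Qed.

End Main.

Local Open Scope ring_scope.

Theorem theorem2p2 (alpha : seq nat) :
  (0 < nth 0 alpha 0)%N -> (0 < nth 0 alpha (size alpha).-1)%N ->
  exists w z : nat,
    mmp alpha = 'X^w * ('X - 1) ^+ z * mmp [:: sumn alpha].
Proof. move=> h0 h1; exact: main_mx. Qed.
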